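(* Let $G$, $K$, $\hat G$, $T$, $S$, $H$ be as described in the context, and let $c:D\to\{0,1\}$ be a stable partial coloring of $\hat G$, witnessed by $H_c$ and $X_c$. Let $D'\supseteq D$ with $D'\setminus D\subseteq H$, and let $c':D'\to\{0,1\}$ be an extension of $c$. Then there is a map $\tilde c:D'\to\{0,1\}$ such that: (i) $\tilde c$, as a coloring of $\hat G[D']$, is strongly maximal in $\lfloor X_c\rfloor$; (ii) $\{x\in D':\tilde c(x)\neq c'(x)\}\subseteq\lfloor X_c\rfloor$; (iii) for every $v\in X_c$, the set $\{x\in\lfloor v\rfloor:\tilde c(x)\neq c'(x)\}$ is a finite set of vertices of finite degree; and (iv) for every $v\in X_c$ such that no vertex of $D'\setminus D$ has a neighbor in $\lfloor v\rfloor$, we have $\tilde c|_{\lfloor v\rfloor}=c|_{\lfloor v\rfloor}$.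
   Context: Setting: $G$ is a countable connected graph with no alternating ray (a ray is alternating if it passes through infinitely many vertices of finite degree and infinitely many of infinite degree); $K$ is a finite graph disjoint from $G$; $\hat G$ is obtained from the disjoint union of $G$ and $K$ by adding arbitrary edges between $V(G)$ and $V(K)$. $T$ is a normal spanning tree of $G$ with root $r$ and tree order $\le$ ($u\le v$ iff $u$ lies on the root–$v$ path of $T$; normal means endpoints of every edge of $G$ are comparable). $\lfloor v\rfloor=\{u:u\ge v\}$, $\lfloor X\rfloor=\bigcup_{v\in X}\lfloor v\rfloor$; an antichain is a set of pairwise $\le$-incomparable vertices. $S$ is the set of $\le$-minimal vertices of finite degree of $G$, and $H=V(G)\setminus\lfloor S\rfloor$. For a coloring $c$ of a graph $\Gamma$: $\mathit{trans}(c)=\{uv\in E(\Gamma):c(u)\neq c(v)\}$; $c*F$ differs from $c$ exactly on $F$; for finite $F$ of vertices of finite degree, $\mathit{dtrans}(c,F)=|\mathit{trans}(c)\setminus\mathit{trans}(c*F)|-|\mathit{trans}(c*F)\setminus\mathit{trans}(c)|$; $c$ is strongly maximal in $A$ if $\mathit{dtrans}(c,F)\ge0$ for all finite $F\subseteq A$ of vertices of finite degree. A partial coloring $c:D\to\{0,1\}$ with $V(K)\subseteq D\subseteq V(\hat G)$ is stable if there are $H_c\subseteq H$ and an antichain $X_c\subseteq H\cup S$ such that: (S1) $D\setminus V(K)$ is the disjoint union of $H_c$ and $\lfloor X_c\rfloor$; (S2) $c$, as a coloring of $\hat G[D]$, is strongly maximal in $\lfloor X_c\rfloor$; (S3) for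 every $w\in V(\hat G)\setminus D$ and every $v\in X_c$, the set $N(w)\cap\lfloor v\rfloor$ is finite. *)

(* Defs.v *)
From Stdlib Require Import List Arith.
Import ListNotations.
Set Implicit Arguments.

Section Defs.
Variable V : Type.

Definition card_is (A : Type) (P : A -> Prop) (n : nat) : Prop :=
  exists l : list A, NoDup l /\ (forall x, In x l <-> P x) /\ length l = n.

(* A (symmetric, irreflexive) edge relation E has exactly n (undirected) edges:
   the set of ordered pairs (u,v) with E u v has exactly 2n elements. *)
Definition edge_count (E : V -> V -> Prop) (n : nat) : Prop :=
  card_is (fun p : V * V => E (fst p) (snd p)) (2 * n).

Definition finite_set (P : V -> Prop) : Prop :=
  exists l : list V, forall x, P x -> In x l.

Variable adj : V -> V -> Prop.   (* adjacency of \hat G *)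
Variable inK : V -> Prop.        (* vertices of K; V(G) is the complement *)

Definition inG (v : V) : Prop := ~ inK v.

Definition fin_deg (v : V) : Prop := finite_set (fun u => inG u /\ adj v u).

Definition fin_deg_in (D : V -> Prop) (v : V) : Prop :=
  finite_set (fun u => D u /\ adj v u).

Inductive reachG (u : V) : V -> Prop :=
| reachG_refl : inG u -> reachG u u
| reachG_step : forall v w, reachG u v -> adj v w -> inG w -> reachG u w.

Definition connectedG : Prop := forall u v, inG u -> inG v -> reachG u v.

Definition countable : Prop := exists f : V -> nat, forall x y, f x = f y -> x = y.

Definition is_ray (f : nat -> V) : Prop :=
  (forall n m, f n = f m -> n = m) /\ (forall n, inG (f n)) /\
  (forall n, adj (f n) (f (S n))).

Definition inf_often (P : nat -> Prop) : Prop := forall N, exists n, N <= n /\ P n.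

Definition alternating_ray (f : nat -> V) : Prop :=
  is_ray f /\ inf_often (fun n => fin_deg (f n)) /\
  inf_often (fun n => ~ fin_deg (f n)).

(* Rooted spanning tree T of G with root r, encoded by its parent map par:
   the tree edges are {v, par v} for v <> r in G. *)
Variable par : V -> V.
Variable r : V.

Definition rooted_spanning_tree : Prop :=
  inG r /\ par r = r /\
  (forall v, inG v -> inG (par v)) /\
  (forall v, inG v -> v <> r -> adj v (par v)) /\
  (forall v, inG v -> exists k, Nat.iter k par v = r).

Definition tle (u v : V) : Prop := inG v /\ exists k, Nat.iter k par v = u.

Definition normal_tree : Prop :=
  forall u v, inG u -> inG v -> adj u v -> tle u v \/ tle v u.

Definition up1 (v : V) : V -> Prop := fun u => tle v u.
Definition up (X : V -> Prop) : V -> Prop := fun u => exists x, X x /\ tle x u.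

Definition antichain (X : V -> Prop) : Prop :=
  forall x y, X x -> X y -> tle x y -> x = y.

Definition Sset (v : V) : Prop :=
  inG v /\ fin_deg v /\ forall u, inG u -> fin_deg u -> tle u v -> u = v.

Definition Hset (v : V) : Prop := inG v /\ ~ up Sset v.

(* Colorings: a partial coloring with domain D is a total map V -> bool of which
   only the values on D matter; it is a coloring of \hat G[D].
   c is strongly maximal in A: for every finite F subset of A consisting of
   vertices of finite degree (in \hat G[D]), with c*F = d the coloring differing
   from c exactly on F, dtrans(c,F) = |trans c \ trans d| - |trans d \ trans c| >= 0. *)
Definition strongly_max (D : V -> Prop) (c : V -> bool) (A : V -> Prop) : Prop :=
  forall F : list V,
    (forall x, In x F -> A x /\ D x /\ fin_deg_in D x) ->
    forall d : V -> bool, (forall x, D x -> (d x <> c x <-> In x F)) ->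
    forall n m : nat,
      edge_count (fun u v => D u /\ D v /\ adj u v /\ c u <> c v /\ d u = d v) n ->
      edge_count (fun u v => D u /\ D v /\ adj u v /\ d u <> d v /\ c u = c v) m ->
      m <= n.

Definition stable_wit (D : V -> Prop) (c : V -> bool) (Hc Xc : V -> Prop) : Prop :=
  (forall v, inK v -> D v) /\
  (forall v, Hc v -> Hset v) /\
  (forall v, Xc v -> Hset v \/ Sset v) /\ antichain Xc /\
  (* (S1) *)
  (forall v, (D v /\ ~ inK v) <-> (Hc v \/ up Xc v)) /\
  (forall v, ~ (Hc v /\ up Xc v)) /\
  (* (S2) *)
  strongly_max D c (up Xc) /\
  (* (S3) *)
  (forall w v, ~ D w -> Xc v -> finite_set (fun u => adj w u /\ up1 v u)).

End Defs.

(* Main.v *)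
Require Import Defs.
From Stdlib Require Import List Arith.
From Stdlib Require Import ZArith Lia Classical ClassicalEpsilon Permutation.
Import ListNotations.

Definition B (P : Prop) : bool := if excluded_middle_informative P then true else false.
Lemma B_true (P : Prop) : B P = true <-> P.
Proof. unfold B; destruct (excluded_middle_informative P); split; auto; intros; try discriminate; contradiction. Qed.
Lemma B_false (P : Prop) : B P = false <-> ~ P.
Proof. unfold B; destruct (excluded_middle_informative P); split; auto; intros; try discriminate; contradiction. Qed.

Definition fin {A} (P : A -> Prop) := exists l : list A, forall x, P x -> In x l.

Lemma fin_nodup {A} (P : A -> Prop) : fin P -> exists l, NoDup l /\ forall x, In x l <-> P x.
Proof.
  intros [l Hl]. revert P Hl. induction l as [|a t IH]; intros P Hl.
  - exists nil. split. constructor. intros x; split; [intros []| intros Hx; apply (Hl x Hx)].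
  - destruct (IH (fun x => P x /\ x <> a)) as [l' [Hnd Hl']].
    { intros x [Hx Hne]. destruct (Hl x Hx); [congruence|auto]. }
    destruct (classic (P a)) as [Ha|Ha].
    + exists (a :: l'). split.
      * constructor; auto. intros Hin. apply Hl' in Hin. tauto.
      * intros x; split.
        -- intros [<-|Hin]; auto. apply Hl' in Hin; tauto.
        -- intros Hx. destruct (classic (x = a)) as [->|Hne]; [left; auto| right; apply Hl'; auto].
    + exists l'. split; auto. intros x; split.
      * intros Hin; apply Hl' in Hin; tauto.
      * intros Hx. apply Hl'. split; auto. intros ->. auto.
Qed.

Lemma fin_sigma {A C} (ws : list A) (Q : A -> Prop) (R : A -> C -> Prop) :
  (forall w, In w ws -> Q w -> fin (R w)) ->
  fin (fun p : A * C => In (fst p) ws /\ Q (fst p) /\ R (fst p) (snd p)).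
Proof.
  induction ws as [|a t IH]; intros H.
  - exists nil. intros p [[] _].
  - destruct IH as [l Hl]. { intros w Hw HQ. apply H; simpl; auto. }
    destruct (classic (Q a)) as [Ha|Ha].
    + destruct (H a (or_introl eq_refl) Ha) as [la Hla].
      exists (map (pair a) la ++ l). intros [x y] [Hin [HQ HR]]; simpl in *.
      apply in_or_app. destruct Hin as [<-|Hin].
      * left. apply in_map. apply Hla. exact HR.
      * right. apply Hl. simpl. auto.
    + exists l. intros [x y] [Hin [HQ HR]]; simpl in *. destruct Hin as [<-|Hin]; [contradiction|].
      apply Hl; simpl; auto.
Qed.

Lemma fin_mono {A} (P Q : A -> Prop) : (forall x, P x -> Q x) -> fin Q -> fin P.
Proof. intros H [l Hl]. exists l. auto. Qed.
Lemma fin_or {A} (P Q : A -> Prop) : fin P -> fin Q -> fin (fun x => P x \/ Q x).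
Proof. intros [l Hl] [m Hm]. exists (l ++ m). intros x [H|H]; apply in_or_app; auto. Qed.
Definition sw {A} (p : A * A) := (snd p, fst p).
Lemma fin_swap {A} (P : A * A -> Prop) : fin P -> fin (fun p => P (sw p)).
Proof. intros [l Hl]. exists (map sw l). intros [x y] H. apply Hl in H.
  change (x, y) with (@sw A (y, x)). apply in_map. exact H. Qed.

Fixpoint Zsum {A} (l : list A) (f : A -> Z) : Z :=
  match l with nil => 0%Z | x :: t => (f x + Zsum t f)%Z end.

Lemma Zsum_ext {A} (l : list A) f g : (forall x, In x l -> f x = g x) -> Zsum l f = Zsum l g.
Proof. induction l; simpl; intros H; auto. rewrite H, IHl; auto. Qed.
Lemma Zsum_add {A} (l : list A) f g : Zsum l (fun x => f x + g x)%Z = (Zsum l f + Zsum l g)%Z.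
Proof. induction l; simpl; lia. Qed.
Lemma Zsum_sub {A} (l : list A) f g : Zsum l (fun x => f x - g x)%Z = (Zsum l f - Zsum l g)%Z.
Proof. induction l; simpl; lia. Qed.
Lemma Zsum_le {A} (l : list A) f g : (forall x, In x l -> f x <= g x)%Z -> (Zsum l f <= Zsum l g)%Z.
Proof. induction l; simpl; intros H; [lia|]. specialize (IHl (fun x Hx => H x (or_intror Hx))).
  specialize (H a (or_introl eq_refl)). lia. Qed.
Lemma Zsum_zero {A} (l : list A) f : (forall x, In x l -> f x = 0%Z) -> Zsum l f = 0%Z.
Proof. induction l; simpl; intros H; auto. rewrite H, IHl; auto. Qed.
Lemma Zsum_perm {A} (l l' : list A) f : Permutation l l' -> Zsum l f = Zsum l' f.
Proof. induction 1; simpl; lia. Qed.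
Lemma Zsum_filter {A} (l : list A) f (q : A -> bool) :
  (forall x, In x l -> q x = false -> f x = 0%Z) -> Zsum l f = Zsum (filter q l) f.
Proof. induction l; simpl; intros H; auto.
  rewrite IHl by auto. destruct (q a) eqn:E; simpl; auto.
  rewrite (H a (or_introl eq_refl) E). lia. Qed.
Lemma Zsum_inv {A} (l1 l2 : list A) f : NoDup l1 -> NoDup l2 ->
  (forall x, f x <> 0%Z -> In x l1 /\ In x l2) -> Zsum l1 f = Zsum l2 f.
Proof.
  intros N1 N2 H. set (q := fun x => negb (Z.eqb (f x) 0)).
  assert (Hq : forall x, q x = false -> f x = 0%Z).
  { intros x. unfold q. destruct (Z.eqb_spec (f x) 0); simpl; auto; discriminate. }
  rewrite (Zsum_filter l1 f q), (Zsum_filter l2 f q); auto.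
  apply Zsum_perm, NoDup_Permutation; try apply NoDup_filter; auto.
  intros x. rewrite !filter_In. unfold q. destruct (Z.eqb_spec (f x) 0); simpl.
  - split; intros [_ ?]; discriminate.
  - specialize (H x n). tauto.
Qed.
Lemma Zsum_ind {A} (l : list A) (q : A -> bool) :
  Zsum l (fun x => if q x then 1%Z else 0%Z) = Z.of_nat (length (filter q l)).
Proof. induction l; simpl; auto. rewrite IHl. destruct (q a); simpl length; lia. Qed.

Lemma card_filter {A} (P : A -> Prop) l : NoDup l -> (forall x, P x -> In x l) ->
  card_is P (length (filter (fun x => B (P x)) l)).
Proof.
  intros N H. exists (filter (fun x => B (P x)) l). split; [apply NoDup_filter; auto|split; auto].
  intros x. rewrite filter_In, B_true. split; [tauto|]. intros Hx; split; auto.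
Qed.
Lemma card_unique {A} (P : A -> Prop) n m : card_is P n -> card_is P m -> n = m.
Proof.
  intros [l [Nl [Hl <-]]] [k [Nk [Hk <-]]].
  apply Nat.le_antisymm; apply NoDup_incl_length; auto; intros x Hx.
  - apply Hk, Hl, Hx.
  - apply Hl, Hk, Hx.
Qed.

Lemma even_card {A} : forall k (l : list (A * A)) (P : A * A -> Prop), length l = k -> NoDup l ->
  (forall x, In x l <-> P x) -> (forall p, P p -> P (sw p)) -> (forall u, ~ P (u, u)) ->
  exists n, k = 2 * n.
Proof.
  induction k as [k IH] using lt_wf_ind. intros l P Hlen N Hl Hsym Hirr.
  destruct l as [|p l0].
  - exists 0. simpl in Hlen. lia.
  - assert (Pp : P p) by (apply Hl; simpl; auto).
    assert (Hne : sw p <> p). { destruct p as [u v]; unfold sw; simpl. intros E. inversion E; subst. eapply Hirr. exact Pp. }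
    assert (Hin : In (sw p) l0).
    { assert (In (sw p) (p :: l0)) by (apply Hl; auto). destruct H; [congruence|auto]. }
    apply in_split in Hin. destruct Hin as [la [lb Heq]]. subst l0.
    apply NoDup_cons_iff in N. destruct N as [Np N0].
    set (P' := fun x => P x /\ x <> p /\ x <> sw p).
    destruct (IH (length (la ++ lb))) with (l := la ++ lb) (P := P') as [n Hn]; auto.
    + rewrite <- Hlen. simpl. rewrite !length_app. simpl. lia.
    + eapply NoDup_remove_1; eauto.
    + intros x. unfold P'. split.
      * intros Hx. assert (Hx' : In x (p :: la ++ sw p :: lb)).
        { right. apply in_app_or in Hx. apply in_or_app. simpl. tauto. }
        apply Hl in Hx'. split; auto. split.
        -- intros ->. apply Np. apply in_app_or in Hx. apply in_or_app. simpl. tauto.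
        -- intros ->. apply (NoDup_remove_2 _ _ _ N0). exact Hx.
      * intros [Hx [H1 H2]]. apply Hl in Hx. destruct Hx as [E|Hx]; [congruence|].
        apply in_app_or in Hx. apply in_or_app. simpl in Hx. destruct Hx as [|[|]]; auto; congruence.
    + intros q [Hq [H1 H2]]. unfold P'. split; [auto|split].
      * intros E. apply H2. rewrite <- E. destruct q; reflexivity.
      * intros E. apply H1. destruct q, p; unfold sw in *; simpl in *; inversion E; subst; reflexivity.
    + intros u [Hu _]. apply (Hirr u Hu).
    + exists (S n). rewrite <- Hlen. simpl. rewrite length_app in *. simpl. lia.
Qed.

Lemma max_lemma {A} (S : A -> Prop) (g : A -> Z) (M : Z) (a0 : A) :
  S a0 -> (forall a, S a -> (g a <= M)%Z) -> exists am, S am /\ forall a, S a -> (g a <= g am)%Z.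
Proof.
  intros H0 HM.
  assert (K : forall n : nat, forall a, S a -> (M - g a <= Z.of_nat n)%Z ->
     exists am, S am /\ forall a, S a -> (g a <= g am)%Z).
  { induction n as [|n IH]; intros a Ha Hle.
    - exists a. split; auto. intros a' Ha'. specialize (HM a' Ha'). lia.
    - destruct (classic (forall a', S a' -> (g a' <= g a)%Z)) as [Hall|Hn].
      + exists a; auto.
      + apply not_all_ex_not in Hn. destruct Hn as [a' Ha'].
        apply imply_to_and in Ha'. destruct Ha' as [Sa' Hlt].
        apply (IH a' Sa'). lia. }
  apply (K (Z.to_nat (M - g a0)) a0 H0). lia.
Qed.
Lemma BT (P : Prop) : B P = true -> P.
Proof. apply B_true. Qed.
Lemma BF (P : Prop) : B P = false -> ~ P.
Proof. apply B_false. Qed.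
Lemma TB (P : Prop) : P -> B P = true.
Proof. apply B_true. Qed.
Lemma FB (P : Prop) : ~ P -> B P = false.
Proof. apply B_false. Qed.

Section Main.
Variable V : Type.
Variables (adj : V -> V -> Prop) (inK : V -> Prop) (par : V -> V) (r : V).
Hypothesis adj_sym : forall u v, adj u v -> adj v u.
Hypothesis adj_irr : forall v, ~ adj v v.
Hypothesis T_tree : rooted_spanning_tree adj inK par r.
Hypothesis T_normal : normal_tree adj inK par.
Variables (D : V -> Prop) (c : V -> bool) (Hc Xc : V -> Prop).
Hypothesis c_stable : stable_wit adj inK par D c Hc Xc.
Variables (Dp : V -> Prop) (c' : V -> bool).
Hypothesis DD' : forall x, D x -> Dp x.
Hypothesis D'H : forall x, Dp x -> ~ D x -> Hset adj inK par x.
Hypothesis c'ext : forall x, D x -> c' x = c x.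

Local Notation tl := (tle inK par).
Local Notation upX := (up inK par Xc).
Local Notation u1 := (up1 inK par).
Local Notation iG := (inG inK).

Lemma iter_inG : forall k x, iG x -> iG (Nat.iter k par x).
Proof. destruct T_tree as [_ [_ [Hp _]]]. induction k; intros x Hx; simpl; auto. Qed.

Lemma iter_r : forall j, Nat.iter j par r = r.
Proof. destruct T_tree as [_ [Hr _]]. induction j; simpl; auto. rewrite IHj; auto. Qed.

Lemma tl_inG1 a x : tl a x -> iG a.
Proof. intros [Hx [k <-]]. apply iter_inG; auto. Qed.
Lemma tl_inG2 a x : tl a x -> iG x.
Proof. intros [Hx _]; auto. Qed.

Lemma tl_trans a b x : tl a b -> tl b x -> tl a x.
Proof. intros [_ [k Hk]] [Hx [j Hj]]. split; auto. exists (k + j).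
  rewrite Nat.iter_add, Hj; auto. Qed.

Lemma tl_comp a b x : tl a x -> tl b x -> tl a b \/ tl b a.
Proof.
  intros Ha Hb. pose proof (tl_inG1 _ _ Ha) as Ga. pose proof (tl_inG1 _ _ Hb) as Gb.
  destruct Ha as [Hx [j Hj]], Hb as [_ [k Hk]].
  destruct (Nat.le_gt_cases j k).
  - right. split; auto. exists (k - j). rewrite <- Hj, <- Nat.iter_add.
    rewrite <- Hk. f_equal. lia.
  - left. split; auto. exists (j - k). rewrite <- Hk, <- Nat.iter_add.
    rewrite <- Hj. f_equal. lia.
Qed.

Lemma anc_fin v : iG v -> fin (fun u => tl u v).
Proof.
  intros Hv. destruct T_tree as [_ [_ [_ [_ Hk]]]]. destruct (Hk v Hv) as [K HK].
  exists (map (fun k => Nat.iter k par v) (seq 0 (S K))).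
  intros u [_ [k <-]]. apply in_map_iff.
  destruct (Nat.le_gt_cases k K).
  - exists k. split; auto. apply in_seq. lia.
  - exists K. split; [|apply in_seq; lia].
    replace k with ((k - K) + K) by lia. rewrite Nat.iter_add, HK, iter_r. auto.
Qed.

Lemma Xc_inG v : Xc v -> iG v.
Proof. destruct c_stable as [_ [_ [HX _]]]. intros H. destruct (HX v H) as [[G _]|[G _]]; auto. Qed.

Lemma upX_D x : upX x -> D x.
Proof. destruct c_stable as [_ [_ [_ [_ [HS1 _]]]]]. intros H. apply (HS1 x). auto. Qed.

Lemma anti a b : Xc a -> Xc b -> tl a b -> a = b.
Proof. destruct c_stable as [_ [_ [_ [HA _]]]]. intros; apply HA; auto. Qed.

Lemma root_unique v v' x : Xc v -> Xc v' -> u1 v x -> u1 v' x -> v = v'.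
Proof.
  intros Hv Hv' H H'. unfold up1 in *. destruct (tl_comp _ _ _ H H') as [E|E].
  - apply anti; auto.
  - symmetry; apply anti; auto.
Qed.

Lemma NBR v0 y z : Xc v0 -> u1 v0 y -> adj y z -> ~ u1 v0 z -> ~ upX z.
Proof.
  intros Hv0 Hy Hadj Hz [v' [Hv' Hz']]. unfold up1 in *.
  assert (Gy : iG y) by (eapply tl_inG2; eauto).
  assert (Gz : iG z) by (eapply tl_inG2; eauto).
  destruct (T_normal y z Gy Gz Hadj) as [E|E].
  - apply Hz. eapply tl_trans; eauto.
  - assert (Hv'y : tl v' y) by (eapply tl_trans; eauto).
    assert (v' = v0).
    { destruct (tl_comp _ _ _ Hv'y Hy) as [F|F]; [apply anti|symmetry; apply anti]; auto. }
    subst. auto.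
Qed.

Lemma ANC_NEW w v u : Dp w -> ~ D w -> Xc v -> u1 v u -> adj w u -> tl w v.
Proof.
  intros Hw HDw Hv Hu Hadj. unfold up1 in *.
  assert (Gw : iG w) by (destruct (D'H w Hw HDw); auto).
  assert (Gu : iG u) by (eapply tl_inG2; eauto).
  destruct (T_normal w u Gw Gu Hadj) as [E|E].
  - destruct (tl_comp _ _ _ E Hu) as [F|F]; auto.
    exfalso. apply HDw. apply upX_D. exists v. auto.
  - exfalso. apply HDw. apply upX_D. exists v. split; auto. eapply tl_trans; eauto.
Qed.

Lemma FD x : upX x -> fin_deg_in adj Dp x -> fin_deg adj inK x.
Proof.
  intros Hx [l Hl]. destruct Hx as [v [Hv Htl]].
  assert (Gx : iG x) by (eapply tl_inG2; eauto).
  destruct (anc_fin x Gx) as [la Hla].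
  exists (la ++ l). intros u [Gu Hadj]. apply in_or_app.
  destruct (T_normal x u Gx Gu Hadj) as [E|E].
  - right. apply Hl. split; auto. apply DD', upX_D. exists v. split; auto. eapply tl_trans; eauto.
  - left. apply Hla. auto.
Qed.


Definition adjD (Dom : V -> Prop) (p : V * V) := Dom (fst p) /\ Dom (snd p) /\ adj (fst p) (snd p).
Definition dif (x y : bool) : Z := if Bool.eqb x y then 0%Z else 1%Z.
Definition contrib (Dom : V -> Prop) (a b : V -> bool) (p : V * V) : Z :=
  if B (adjD Dom p) then (dif (b (fst p)) (b (snd p)) - dif (a (fst p)) (a (snd p)))%Z else 0%Z.
Definition delta Dom a b (L : list (V * V)) := Zsum L (contrib Dom a b).
Definition good Dom (a b : V -> bool) (L : list (V * V)) :=
  NoDup L /\ forall p, adjD Dom p -> (a (fst p) <> b (fst p) \/ a (snd p) <> b (snd p)) -> In p L.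
Definition ind (P : Prop) : Z := if B P then 1%Z else 0%Z.

Lemma dif_bd x y : (0 <= dif x y <= 1)%Z.
Proof. unfold dif; destruct (Bool.eqb x y); lia. Qed.
Lemma ind_bd P : (0 <= ind P <= 1)%Z.
Proof. unfold ind; destruct (B P); lia. Qed.
Lemma ind_T (P : Prop) : P -> ind P = 1%Z.
Proof. intros H. unfold ind. rewrite (TB _ H); auto. Qed.
Lemma ind_F (P : Prop) : ~ P -> ind P = 0%Z.
Proof. intros H. unfold ind. rewrite (FB _ H); auto. Qed.
Lemma dif_eq x : dif x x = 0%Z.
Proof. unfold dif; destruct x; auto. Qed.

Lemma contrib_nz Dom a b p : contrib Dom a b p <> 0%Z ->
  adjD Dom p /\ (a (fst p) <> b (fst p) \/ a (snd p) <> b (snd p)).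
Proof.
  unfold contrib. destruct (B (adjD Dom p)) eqn:E; [|intros H; exfalso; apply H; reflexivity]. apply BT in E.
  intros H. split; auto.
  destruct (classic (a (fst p) = b (fst p))) as [E1|E1]; auto.
  destruct (classic (a (snd p) = b (snd p))) as [E2|E2]; auto.
  rewrite E1, E2 in H. lia.
Qed.

Lemma contrib_same Dom a b p : (forall x, Dom x -> b x = a x) -> contrib Dom a b p = 0%Z.
Proof.
  intros H. destruct (Z.eq_dec (contrib Dom a b p) 0) as [|Hn]; auto.
  apply contrib_nz in Hn. destruct Hn as [[H1 [H2 _]] [E|E]]; exfalso; apply E; symmetry; auto.
Qed.

Lemma delta_inv Dom a b L1 L2 : good Dom a b L1 -> good Dom a b L2 -> delta Dom a b L1 = delta Dom a b L2.
Proof.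
  intros [N1 H1] [N2 H2]. apply Zsum_inv; auto. intros p Hp. apply contrib_nz in Hp.
  destruct Hp. auto.
Qed.

Definition goodX Dom (X : list V) L :=
  NoDup L /\ forall p, adjD Dom p -> (In (fst p) X \/ In (snd p) X) -> In p L.

Lemma goodX_ex Dom X : (forall x, In x X -> Dom x -> fin_deg_in adj Dom x) -> exists L, goodX Dom X L.
Proof.
  intros H.
  assert (F : fin (fun p : V * V => In (fst p) X /\ Dom (fst p) /\ (Dom (snd p) /\ adj (fst p) (snd p)))).
  { apply (fin_sigma X Dom (fun x u => Dom u /\ adj x u)). intros w Hw Hd. apply H; auto. }
  assert (F2 : fin (fun p : V * V => adjD Dom p /\ (In (fst p) X \/ In (snd p) X))).
  { eapply fin_mono; [|apply fin_or; [exact F| apply fin_swap; exact F]].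
    intros [x y] [[Hx [Hy Ha]] [I|I]]; simpl in *; [left|right]; unfold sw; simpl; auto. }
  destruct (fin_nodup _ F2) as [L [N HL]]. exists L. split; auto. intros p Hp HI. apply HL; auto.
Qed.

Lemma good_of_X Dom X L a b : goodX Dom X L -> (forall x, Dom x -> a x <> b x -> In x X) -> good Dom a b L.
Proof.
  intros [N HL] H. split; auto. intros p Hp [E|E]; apply HL; auto.
  - left. apply H; auto. destruct Hp; auto.
  - right. apply H; auto. destruct Hp as [_ [? _]]; auto.
Qed.

Definition Pn Dom (a d : V -> bool) (p : V * V) :=
  Dom (fst p) /\ Dom (snd p) /\ adj (fst p) (snd p) /\ a (fst p) <> a (snd p) /\ d (fst p) = d (snd p).

Lemma contrib_P Dom a d p : contrib Dom a d p = (ind (Pn Dom d a p) - ind (Pn Dom a d p))%Z.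
Proof.
  assert (true <> false) by discriminate. assert (false <> true) by discriminate.
  unfold contrib, ind, dif, Pn, adjD.
  destruct (B (_ /\ _ /\ _)) eqn:E1; [apply BT in E1|apply BF in E1];
  (destruct (B (Dom (fst p) /\ Dom (snd p) /\ adj (fst p) (snd p) /\ d (fst p) <> d (snd p) /\ a (fst p) = a (snd p))) eqn:E2;
    [apply BT in E2|apply BF in E2]);
  (destruct (B (Dom (fst p) /\ Dom (snd p) /\ adj (fst p) (snd p) /\ a (fst p) <> a (snd p) /\ d (fst p) = d (snd p))) eqn:E3;
    [apply BT in E3|apply BF in E3]);
  destruct (a (fst p)), (a (snd p)), (d (fst p)), (d (snd p)); simpl; try reflexivity;
  exfalso; tauto.
Qed.

Lemma Pn_in Dom a d L p : good Dom a d L -> Pn Dom a d p -> In p L.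
Proof.
  intros [_ HL] [H1 [H2 [H3 [H4 H5]]]]. apply HL. split; auto.
  destruct (classic (a (fst p) = d (fst p))); auto. right. intros E. congruence.
Qed.

Lemma Pn_sym Dom a d p : Pn Dom a d p -> Pn Dom a d (sw p).
Proof. destruct p; unfold Pn, sw; simpl. intros [? [? [? [? ?]]]]. repeat split; auto. Qed.
Lemma Pn_irr Dom a d u : ~ Pn Dom a d (u, u).
Proof. unfold Pn; simpl. intros [_ [_ [H _]]]. apply (adj_irr u H). Qed.

Lemma delta_cnt Dom a d L : delta Dom a d L =
  (Z.of_nat (length (filter (fun p => B (Pn Dom d a p)) L)) - Z.of_nat (length (filter (fun p => B (Pn Dom a d p)) L)))%Z.
Proof.
  unfold delta. rewrite (Zsum_ext _ _ (fun p => ind (Pn Dom d a p) - ind (Pn Dom a d p))%Z).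
  2:{ intros; apply contrib_P. }
  rewrite Zsum_sub. unfold ind. rewrite !Zsum_ind. auto.
Qed.

Lemma good_sym Dom a d L : good Dom a d L -> good Dom d a L.
Proof. intros [N H]. split; auto. intros p Hp [E|E]; apply H; auto. Qed.

Lemma SM_elim Dom a A : strongly_max adj Dom a A ->
  forall F, (forall x, In x F -> A x /\ Dom x /\ fin_deg_in adj Dom x) ->
  forall d, (forall x, Dom x -> (d x <> a x <-> In x F)) ->
  forall L, good Dom a d L -> (delta Dom a d L <= 0)%Z.
Proof.
  intros HS F HF d Hd L HL.
  pose proof (card_filter (Pn Dom a d) L (proj1 HL) (fun p => Pn_in Dom a d L p HL)) as C1.
  pose proof (card_filter (Pn Dom d a) L (proj1 HL) (fun p => Pn_in Dom d a L p (good_sym _ _ _ _ HL))) as C2.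
  destruct C1 as [l1 [N1 [H1 E1]]] .
  destruct (even_card _ l1 (Pn Dom a d) eq_refl N1 H1 (Pn_sym Dom a d) (Pn_irr Dom a d)) as [n Hn].
  destruct C2 as [l2 [N2 [H2 E2]]] .
  destruct (even_card _ l2 (Pn Dom d a) eq_refl N2 H2 (Pn_sym Dom d a) (Pn_irr Dom d a)) as [m Hm].
  assert (Hmn : m <= n).
  { apply (HS F HF d Hd n m).
    - unfold edge_count. exists l1. split; [exact N1|split; [exact H1|lia]].
    - unfold edge_count. exists l2. split; [exact N2|split; [exact H2|lia]]. }
  rewrite delta_cnt. lia.
Qed.

Lemma SM_intro Dom a A :
  (forall F, (forall x, In x F -> A x /\ Dom x /\ fin_deg_in adj Dom x) ->
   forall d, (forall x, Dom x -> (d x <> a x <-> In x F)) ->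
   forall L, good Dom a d L -> (delta Dom a d L <= 0)%Z) ->
  strongly_max adj Dom a A.
Proof.
  intros H F HF d Hd n m Hn Hm.
  destruct (goodX_ex Dom F) as [L HL]. { intros x Hx _. apply HF; auto. }
  assert (G : good Dom a d L).
  { apply (good_of_X Dom F); auto. intros x Hx E. apply Hd; auto. }
  specialize (H F HF d Hd L G). rewrite delta_cnt in H.
  pose proof (card_filter (Pn Dom a d) L (proj1 G) (fun p => Pn_in Dom a d L p G)) as C1.
  pose proof (card_filter (Pn Dom d a) L (proj1 G) (fun p => Pn_in Dom d a L p (good_sym _ _ _ _ G))) as C2.
  unfold edge_count in Hn, Hm.
  pose proof (card_unique _ _ _ Hn C1). pose proof (card_unique _ _ _ Hm C2). lia.
Qed.


Definition mod_v v (b : V -> bool) := exists X,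
  (forall x, In x X -> u1 v x /\ Dp x /\ fin_deg_in adj Dp x) /\
  (forall x, Dp x -> b x <> c' x -> In x X).

Definition glist (b : V -> bool) : list (V * V) :=
  epsilon (inhabits nil) (fun L => good Dp c' b L).
Definition g (b : V -> bool) : Z := delta Dp c' b (glist b).

Lemma g_eq b L : good Dp c' b L -> delta Dp c' b L = g b.
Proof.
  intros H. unfold g. apply delta_inv; auto.
  unfold glist. apply epsilon_spec. exists L; auto.
Qed.

Lemma good_mod v b : mod_v v b -> exists L, good Dp c' b L.
Proof.
  intros [X [HX1 HX2]]. destruct (goodX_ex Dp X) as [L HL].
  { intros x Hx _. apply HX1; auto. }
  exists L. apply (good_of_X Dp X); [exact HL|]. intros x Hx E. apply HX2; auto.
Qed.

Definition Ev v (p : V * V) := adjD Dp p /\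
  ((~ D (fst p) /\ u1 v (snd p)) \/ (u1 v (fst p) /\ ~ D (snd p))).

Lemma Ev_fin v : Xc v -> fin (Ev v).
Proof.
  intros Hv. destruct (anc_fin v (Xc_inG v Hv)) as [la Hla].
  destruct c_stable as [_ [_ [_ [_ [_ [_ [_ HS3]]]]]]].
  assert (F : fin (fun p : V * V => In (fst p) la /\ (~ D (fst p) /\ Dp (fst p)) /\
                     (adj (fst p) (snd p) /\ u1 v (snd p)))).
  { apply (fin_sigma la (fun w => ~ D w /\ Dp w) (fun w u => adj w u /\ u1 v u)).
    intros w _ [Hw _]. apply (HS3 w v Hw Hv). }
  eapply fin_mono; [|apply fin_or; [exact F|apply fin_swap; exact F]].
  intros [x y] [[Hx [Hy Ha]] [[Hn Hu]|[Hu Hn]]]; simpl in *.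
  - left. simpl. split; [apply Hla; eapply ANC_NEW; eauto|]. auto.
  - right. unfold sw; simpl. split; [apply Hla; eapply ANC_NEW; eauto|]. auto.
Qed.

Lemma bound v b L : Xc v -> mod_v v b -> good Dp c' b L ->
  (delta Dp c' b L <= Zsum L (fun p => ind (Ev v p)))%Z.
Proof.
  intros Hv [X [HX1 HX2]] HL.
  destruct c_stable as [_ [_ [_ [_ [_ [_ [HS2 _]]]]]]].
  assert (HLD : good D c b L).
  { destruct HL as [N HL]. split; auto. intros p [H1 [H2 H3]] E. apply HL.
    - split; [auto|split; auto].
    - rewrite !c'ext; auto. }
  set (F := filter (fun x => B (b x <> c x /\ D x)) X).
  assert (HD : (delta D c b L <= 0)%Z).
  { apply (SM_elim D c upX HS2 F).
    - intros x Hx. unfold F in Hx. apply filter_In in Hx. destruct Hx as [Hx Bx]. apply BT in Bx.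
      destruct (HX1 x Hx) as [Hu [HDp Hf]]. split; [exists v; auto|split; [tauto|]].
      eapply fin_mono; [|exact Hf]. intros u [? ?]; auto.
    - intros x Hx. split.
      + intros E. unfold F. apply filter_In. split; [apply HX2; auto; rewrite c'ext; auto|].
        apply TB. auto.
      + intros Hin. unfold F in Hin. apply filter_In in Hin. destruct Hin as [_ Bx]. apply BT in Bx. tauto.
    - exact HLD. }
  unfold delta in *.
  assert (Hpt : forall p, In p L -> (contrib Dp c' b p <= contrib D c b p + ind (Ev v p))%Z).
  { intros p _. pose proof (ind_bd (Ev v p)).
    unfold contrib. destruct (B (adjD D p)) eqn:E1.
    - apply BT in E1. destruct E1 as [H1 [H2 H3]].
      rewrite (TB (adjD Dp p)) by (split; [auto|split; auto]).
      rewrite !c'ext by auto. lia.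
    - apply BF in E1. destruct (B (adjD Dp p)) eqn:E2; [|lia]. apply BT in E2.
      destruct (classic (b (fst p) = c' (fst p))) as [Q1|Q1];
      [destruct (classic (b (snd p) = c' (snd p))) as [Q2|Q2]|].
      + rewrite Q1, Q2. lia.
      + assert (Hu : u1 v (snd p)) by (apply HX1, HX2; auto; destruct E2 as [_ [? _]]; auto).
        assert (HDs : D (snd p)) by (apply upX_D; exists v; auto).
        assert (~ D (fst p)) by (intros HH; apply E1; destruct E2 as [_ [_ ?]]; split; auto).
        rewrite ind_T by (split; auto). pose proof (dif_bd (b (fst p)) (b (snd p))).
        pose proof (dif_bd (c' (fst p)) (c' (snd p))). lia.
      + assert (Hu : u1 v (fst p)) by (apply HX1, HX2; auto; destruct E2 as [? _]; auto).
        assert (HDs : D (fst p)) by (apply upX_D; exists v; auto).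
        assert (~ D (snd p)) by (intros HH; apply E1; destruct E2 as [_ [_ ?]]; split; auto).
        rewrite ind_T by (split; auto). pose proof (dif_bd (b (fst p)) (b (snd p))).
        pose proof (dif_bd (c' (fst p)) (c' (snd p))). lia. }
  eapply Z.le_trans; [apply (Zsum_le _ _ _ Hpt)|]. rewrite Zsum_add. lia.
Qed.

Lemma Ev_sum v L ev : NoDup L -> (forall p, Ev v p -> In p ev) ->
  (Zsum L (fun p => ind (Ev v p)) <= Z.of_nat (length ev))%Z.
Proof.
  intros N H. unfold ind. rewrite Zsum_ind. apply Nat2Z.inj_le. apply NoDup_incl_length.
  - apply NoDup_filter; auto.
  - intros p Hp. apply filter_In in Hp. destruct Hp as [_ Hp]. apply BT in Hp. auto.
Qed.

Definition NEWv v := forall w u, Dp w -> ~ D w -> u1 v u -> ~ adj w u.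

Lemma g_c' : g c' = 0%Z.
Proof. unfold g, delta. apply Zsum_zero. intros; apply contrib_same; auto. Qed.

Lemma mod_c' v : mod_v v c'.
Proof. exists nil. split; [intros x []|intros x _ E; exfalso; auto]. Qed.

Lemma bstar_ex v : exists bs, Xc v -> mod_v v bs /\ (forall b, mod_v v b -> (g b <= g bs)%Z) /\
   (NEWv v -> bs = c').
Proof.
  destruct (classic (Xc v)) as [Hv|Hv]; [|exists c'; tauto].
  destruct (classic (NEWv v)) as [HN|HN].
  - exists c'. intros _. split; [apply mod_c'|split; auto].
    intros b Hb. rewrite g_c'. destruct (good_mod v b Hb) as [L HL].
    rewrite <- (g_eq b L HL). eapply Z.le_trans; [apply (bound v b L Hv Hb HL)|].
    rewrite Zsum_zero; [lia|]. intros p _. apply ind_F.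
    intros [[H1 [H2 H3]] [[Hn Hu]|[Hu Hn]]].
    + apply (HN (fst p) (snd p)); auto.
    + apply (HN (snd p) (fst p)); auto.
  - destruct (Ev_fin v Hv) as [ev Hev].
    destruct (max_lemma (mod_v v) g (Z.of_nat (length ev)) c' (mod_c' v)) as [bs [Hbs Hopt]].
    + intros b Hb. destruct (good_mod v b Hb) as [L HL]. rewrite <- (g_eq b L HL).
      eapply Z.le_trans; [apply (bound v b L Hv Hb HL)|]. apply Ev_sum; auto. apply HL.
    + exists bs. intros _. split; auto. split; auto. intros; contradiction.
Qed.

Definition bstar v : V -> bool := proj1_sig (constructive_indefinite_description _ (bstar_ex v)).
Lemma bstar_spec v : Xc v -> mod_v v (bstar v) /\ (forall b, mod_v v b -> (g b <= g (bstar v))%Z) /\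
   (NEWv v -> bstar v = c').
Proof. unfold bstar. destruct (constructive_indefinite_description _ (bstar_ex v)); simpl. auto. Qed.

Definition root x := epsilon (inhabits r) (fun v => Xc v /\ u1 v x).
Definition ct x := if B (upX x) then bstar (root x) x else c' x.

Lemma ct_in v x : Xc v -> u1 v x -> ct x = bstar v x.
Proof.
  intros Hv Hx. unfold ct. rewrite TB by (exists v; auto).
  assert (R : Xc (root x) /\ u1 (root x) x).
  { unfold root. apply epsilon_spec. exists v; auto. }
  rewrite (root_unique (root x) v x); tauto.
Qed.
Lemma ct_out x : ~ upX x -> ct x = c' x.
Proof. intros H. unfold ct. rewrite FB; auto. Qed.

Definition bmix v0 (d1 : V -> bool) x := if B (u1 v0 x) then d1 x else c' x.

Lemma LOC v0 d1 X L : Xc v0 -> (forall x, In x X -> u1 v0 x /\ Dp x /\ fin_deg_in adj Dp x) ->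
  (forall x, Dp x -> d1 x <> ct x -> In x X) -> good Dp ct d1 L -> (delta Dp ct d1 L <= 0)%Z.
Proof.
  intros Hv0 HX HXc HL.
  destruct (bstar_spec v0 Hv0) as [[Xs [HXs1 HXs2]] [Hopt _]].
  set (bs := bstar v0) in *.
  assert (Hin : forall w, u1 v0 w -> bmix v0 d1 w = d1 w /\ bs w = ct w).
  { intros w Hw. unfold bmix. rewrite TB by auto. split; auto. symmetry. apply ct_in; auto. }
  assert (Hout : forall w, Dp w -> ~ u1 v0 w -> bmix v0 d1 w = c' w /\ bs w = c' w /\ d1 w = ct w).
  { intros w Hw Hn. unfold bmix. rewrite FB by auto. split; auto. split.
    - destruct (classic (bs w = c' w)) as [|E]; auto. exfalso. apply Hn, HXs1, HXs2; auto.
    - destruct (classic (d1 w = ct w)) as [|E]; auto. exfalso. apply Hn, HX, HXc; auto. }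
  assert (Hmod : mod_v v0 (bmix v0 d1)).
  { exists (X ++ Xs). split.
    - intros x Hx. apply in_app_or in Hx. destruct Hx; auto.
    - intros x Hx E. apply in_or_app. destruct (classic (u1 v0 x)) as [Hu|Hu].
      + destruct (Hin x Hu) as [E1 E2]. rewrite E1 in E.
        destruct (classic (d1 x = ct x)) as [E3|E3]; [right; apply HXs2; auto; congruence|left; auto].
      + destruct (Hout x Hx Hu) as [E1 _]. contradiction. }
  destruct (goodX_ex Dp (X ++ Xs)) as [L' HL'].
  { intros x Hx _. apply in_app_or in Hx. destruct Hx as [Hx|Hx]; [apply HX|apply HXs1]; auto. }
  assert (G1 : good Dp c' (bmix v0 d1) L').
  { apply (good_of_X Dp (X ++ Xs)); [exact HL'|]. destruct Hmod as [Y [HY1 HY2]].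
    intros x Hx E. destruct (classic (u1 v0 x)) as [Hu|Hu].
    - destruct (Hin x Hu) as [E1 E2]. rewrite E1 in E. apply in_or_app.
      destruct (classic (d1 x = ct x)) as [E3|E3]; [right; apply HXs2; auto; congruence|left; auto].
    - destruct (Hout x Hx Hu) as [E1 _]. congruence. }
  assert (G2 : good Dp c' bs L').
  { apply (good_of_X Dp (X ++ Xs)); [exact HL'|]. intros x Hx E. apply in_or_app. right. apply HXs2; auto. }
  assert (G3 : good Dp ct d1 L').
  { apply (good_of_X Dp (X ++ Xs)); [exact HL'|]. intros x Hx E. apply in_or_app. left. apply HXc; auto. }
  rewrite (delta_inv _ _ _ L L' HL G3).
  assert (Hpt : forall p, contrib Dp ct d1 p = (contrib Dp c' (bmix v0 d1) p - contrib Dp c' bs p)%Z).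
  { intros [y z]. unfold contrib. simpl. destruct (B (adjD Dp (y, z))) eqn:EA; [|lia].
    apply BT in EA. destruct EA as [Hy [Hz Ha]]; simpl in *.
    destruct (classic (u1 v0 y)) as [Uy|Uy]; destruct (classic (u1 v0 z)) as [Uz|Uz].
    - destruct (Hin y Uy) as [A1 A2]. destruct (Hin z Uz) as [B1 B2].
      rewrite A1, A2, B1, B2. lia.
    - destruct (Hin y Uy) as [A1 A2]. destruct (Hout z Hz Uz) as [B1 [B2 B3]].
      assert (C : ct z = c' z) by (apply ct_out; eapply NBR; eauto).
      rewrite A1, A2, B1, B2, B3, C. lia.
    - destruct (Hin z Uz) as [A1 A2]. destruct (Hout y Hy Uy) as [B1 [B2 B3]].
      assert (C : ct y = c' y) by (apply ct_out; eapply NBR; eauto).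
      rewrite A1, A2, B1, B2, B3, C. lia.
    - destruct (Hout y Hy Uy) as [A1 [A2 A3]]. destruct (Hout z Hz Uz) as [B1 [B2 B3]].
      rewrite A1, A2, A3, B1, B2, B3. lia. }
  unfold delta. rewrite (Zsum_ext _ _ _ (fun p _ => Hpt p)), Zsum_sub.
  fold (delta Dp c' (bmix v0 d1) L') (delta Dp c' bs L').
  rewrite (g_eq _ _ G1), (g_eq _ _ G2). specialize (Hopt _ Hmod). lia.
Qed.


Definition mixA v0 (d : V -> bool) x := if B (u1 v0 x) then d x else ct x.
Definition mixB v0 (d : V -> bool) x := if B (u1 v0 x) then ct x else d x.

Lemma GLOB : forall n F d L, length F <= n ->
  (forall x, In x F -> upX x /\ Dp x /\ fin_deg_in adj Dp x) ->
  (forall x, Dp x -> d x <> ct x -> In x F) -> good Dp ct d L -> (delta Dp ct d L <= 0)%Z.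
Proof.
  induction n as [|n IH]; intros F d L Hlen HF Hd HL.
  - destruct F; [|simpl in Hlen; lia].
    unfold delta. rewrite Zsum_zero; [lia|]. intros p _. apply contrib_same.
    intros x Hx. destruct (classic (d x = ct x)); auto. exfalso. apply (Hd x Hx); auto.
  - destruct F as [|x0 F'].
    { unfold delta. rewrite Zsum_zero; [lia|]. intros p _. apply contrib_same.
      intros x Hx. destruct (classic (d x = ct x)); auto. exfalso. apply (Hd x Hx); auto. }
    destruct (HF x0 (or_introl eq_refl)) as [[v0 [Hv0 Hx0]] _].
    assert (Hin : forall w, u1 v0 w -> mixA v0 d w = d w /\ mixB v0 d w = ct w).
    { intros w Hw. unfold mixA, mixB. rewrite TB by auto. auto. }
    assert (Hout : forall w, ~ u1 v0 w -> mixA v0 d w = ct w /\ mixB v0 d w = d w).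
    { intros w Hw. unfold mixA, mixB. rewrite FB by auto. auto. }
    assert (Hpt : forall p, contrib Dp ct d p = (contrib Dp ct (mixA v0 d) p + contrib Dp ct (mixB v0 d) p)%Z).
    { intros [y z]. unfold contrib. simpl. destruct (B (adjD Dp (y, z))) eqn:EA; [|lia].
      apply BT in EA. destruct EA as [Hy [Hz Ha]]; simpl in *.
      assert (Nb : forall a b, u1 v0 a -> adj a b -> ~ u1 v0 b -> Dp b -> d b = ct b).
      { intros a b Ua Hab Ub Db. destruct (classic (d b = ct b)) as [|E]; auto. exfalso.
        apply (NBR v0 a b Hv0 Ua Hab Ub). apply HF, Hd; auto. }
      destruct (classic (u1 v0 y)) as [Uy|Uy]; destruct (classic (u1 v0 z)) as [Uz|Uz].
      - destruct (Hin y Uy) as [A1 A2]. destruct (Hin z Uz) as [B1 B2].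
        rewrite A1, A2, B1, B2. lia.
      - destruct (Hin y Uy) as [A1 A2]. destruct (Hout z Uz) as [B1 B2].
        pose proof (Nb y z Uy Ha Uz Hz) as C.
        rewrite A1, A2, B1, B2, C. lia.
      - destruct (Hin z Uz) as [A1 A2]. destruct (Hout y Uy) as [B1 B2].
        pose proof (Nb z y Uz (adj_sym _ _ Ha) Uy Hy) as C.
        rewrite A1, A2, B1, B2, C. lia.
      - destruct (Hout y Uy) as [A1 A2]. destruct (Hout z Uz) as [B1 B2].
        rewrite A1, A2, B1, B2. lia. }
    unfold delta. rewrite (Zsum_ext _ _ _ (fun p _ => Hpt p)), Zsum_add.
    fold (delta Dp ct (mixA v0 d) L) (delta Dp ct (mixB v0 d) L).
    destruct HL as [NL HL].
    assert (D1 : (delta Dp ct (mixA v0 d) L <= 0)%Z).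
    { apply (LOC v0 _ (filter (fun x => B (u1 v0 x)) (x0 :: F'))); auto.
      - intros x Hx. apply filter_In in Hx. destruct Hx as [Hx Bx]. apply BT in Bx.
        destruct (HF x Hx) as [_ [? ?]]. auto.
      - intros x Hx E. apply filter_In. destruct (classic (u1 v0 x)) as [U|U].
        + destruct (Hin x U) as [A1 _]. rewrite A1 in E. split; [apply Hd; auto|apply TB; auto].
        + destruct (Hout x U) as [A1 _]. contradiction.
      - split; auto. intros p Hp E. apply HL; auto.
        destruct E as [E|E]; [left|right]; intros E'; apply E;
          (destruct (classic (u1 v0 (fst p))); destruct (classic (u1 v0 (snd p))));
          unfold mixA; try rewrite TB by auto; try rewrite FB by auto; auto. }
    assert (D2 : (delta Dp ct (mixB v0 d) L <= 0)%Z).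
    { apply (IH (filter (fun x => negb (B (u1 v0 x))) F')).
      - pose proof (filter_length_le (fun x => negb (B (u1 v0 x))) F'). simpl in Hlen. lia.
      - intros x Hx. apply filter_In in Hx. apply HF. right. tauto.
      - intros x Hx E. apply filter_In. destruct (classic (u1 v0 x)) as [U|U].
        + destruct (Hin x U) as [_ A2]. contradiction.
        + destruct (Hout x U) as [_ A2]. rewrite A2 in E.
          destruct (Hd x Hx E) as [<-|H]; [contradiction|].
          split; auto. rewrite FB; auto.
      - split; auto. intros p Hp E. apply HL; auto.
        destruct E as [E|E]; [left|right]; intros E'; apply E;
          unfold mixB; destruct (B (u1 v0 _)); auto. }
    lia.
Qed.

Theorem main_sec : exists ct : V -> bool,
    strongly_max adj Dp ct upX /\
    (forall x, Dp x -> ct x <> c' x -> upX x) /\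
    (forall v, Xc v ->
       finite_set (fun x => u1 v x /\ ct x <> c' x) /\
       (forall x, u1 v x -> ct x <> c' x -> fin_deg adj inK x)) /\
    (forall v, Xc v ->
       (forall w u, Dp w -> ~ D w -> u1 v u -> ~ adj w u) ->
       forall x, u1 v x -> ct x = c x).
Proof.
  exists ct. split; [|split; [|split]].
  - apply SM_intro. intros F HF d Hd L HL. apply (GLOB (length F) F d L); auto.
    intros x Hx E. apply Hd; auto.
  - intros x Hx E. destruct (classic (upX x)) as [|U]; auto. exfalso. apply E, ct_out; auto.
  - intros v Hv. destruct (bstar_spec v Hv) as [[X [HX1 HX2]] _].
    assert (K : forall x, u1 v x -> ct x <> c' x -> In x X).
    { intros x Hx E. rewrite (ct_in v x Hv Hx) in E. apply HX2; auto.
      apply DD', upX_D. exists v; auto. }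
    split.
    + exists X. intros x [? ?]. auto.
    + intros x Hx E. apply FD; [exists v; auto|]. apply HX1, K; auto.
  - intros v Hv HN x Hx. destruct (bstar_spec v Hv) as [_ [_ H3]].
    rewrite (ct_in v x Hv Hx), H3 by exact HN. apply c'ext, upX_D. exists v; auto.
Qed.

End Main.

Theorem lemma3p5 (V : Type) (adj : V -> V -> Prop) (inK : V -> Prop)
  (par : V -> V) (r : V)
  (adj_sym : forall u v, adj u v -> adj v u)
  (adj_irr : forall v, ~ adj v v)
  (K_fin : finite_set inK)
  (G_count : countable {v : V | inG inK v})
  (G_conn : connectedG adj inK)
  (G_noalt : forall f, ~ alternating_ray adj inK f)
  (T_tree : rooted_spanning_tree adj inK par r)
  (T_normal : normal_tree adj inK par)
  (D : V -> Prop) (c : V -> bool) (Hc Xc : V -> Prop)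
  (c_stable : stable_wit adj inK par D c Hc Xc)
  (D' : V -> Prop) (c' : V -> bool)
  (DD' : forall x, D x -> D' x)
  (D'H : forall x, D' x -> ~ D x -> Hset adj inK par x)
  (c'ext : forall x, D x -> c' x = c x) :
  exists ct : V -> bool,
    strongly_max adj D' ct (up inK par Xc) /\
    (forall x, D' x -> ct x <> c' x -> up inK par Xc x) /\
    (forall v, Xc v ->
       finite_set (fun x => up1 inK par v x /\ ct x <> c' x) /\
       (forall x, up1 inK par v x -> ct x <> c' x -> fin_deg adj inK x)) /\
    (forall v, Xc v ->
       (forall w u, D' w -> ~ D w -> up1 inK par v u -> ~ adj w u) ->
       forall x, up1 inK par v x -> ct x = c x).
Proof.
  exact (main_sec V adj inK par r adj_sym adj_irr T_tree T_normal D c Hc Xc c_stable D' c' DD' D'H c'ext).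
Qed.
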